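(* In the setting of the context, for all integers $m\ge1$ and $n\ge0$, $$\alpha(A_{n+m-1}A_{n+m-2}\cdots A_n)\ \ge\ \gamma(1-\gamma)^{m-1}\,\mathcal G_{[n,n+m)}.$$
   Context: Let $N\ge2$, $d\ge1$, $\mathcal N=\{1,\dots,N\}$, $\gamma\in(0,1)$. For each nonempty $S\subseteq\mathcal N$ and $j\in\mathcal N$ let $\omega_{S,j}:(\mathbb R^d)^N\to[0,\infty)$ satisfy $\sum_{j\in S}\omega_{S,j}(X)=1$ and $\omega_{S,j}(X)=0$ for $j\notin S$. For each time $r\ge0$ let $\{[i]_r:i\in\mathcal N\}$ be a partition of $\mathcal N$ ($[i]_r$ the block containing $i$) and $X_r\in(\mathbb R^d)^N$ a state. Let $W_r:=(\omega_{[i]_r,j}(X_r))_{i,j}$ and $A_r:=(1-\gamma)I_N+\gamma W_r$. For $n\ge0,m\ge1$ set $\mathcal T^{ij}_{[n,n+m)}:=\{r: n\le r<n+m,\ [i]_r=[j]_r\}$ and $\mathcal G_{[n,n+m)}:=\min_{i,j\in\mathcal N}|\mathcal T^{ij}_{[n,n+m)}|$. The ergodicity coefficient of $A=(a_{ij})$ is $\alpha(A):=\min_{i,j}\sum_{k}\min\{a_{ik},a_{jk}\}$. *)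

(* Defs.v *)
From HB Require Import structures.
From mathcomp Require Import all_boot all_order all_algebra.
Set Implicit Arguments. Unset Strict Implicit. Unset Printing Implicit Defensive.
Import Order.TTheory GRing.Theory Num.Theory.
Local Open Scope ring_scope.

(* Minimum of a finite list of reals (the list below is always nonempty). *)
Definition seqminr (R : realFieldType) (s : seq R) : R :=
  foldr Num.min (head 0 s) s.

Definition ergco (R : realFieldType) (n : nat) (A : 'M[R]_n) : R :=
  seqminr [seq \sum_(k < n) Num.min (A i k) (A j k)
          | i <- enum 'I_n, j <- enum 'I_n].

Definition blk (N : nat) (P : {set {set 'I_N}}) (i : 'I_N) : {set 'I_N} :=
  pblock P i.

Definition Wmat (R : realFieldType) (N d : nat)
  (omega : {set 'I_N} -> 'I_N -> ('I_N -> 'rV[R]_d) -> R)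
  (P : {set {set 'I_N}}) (X : 'I_N -> 'rV[R]_d) : 'M[R]_N :=
  \matrix_(i, j) omega (blk P i) j X.

Definition Amat (R : realFieldType) (N d : nat)
  (omega : {set 'I_N} -> 'I_N -> ('I_N -> 'rV[R]_d) -> R) (gamma : R)
  (P : {set {set 'I_N}}) (X : 'I_N -> 'rV[R]_d) : 'M[R]_N :=
  (1 - gamma)%:M + gamma *: Wmat omega P X.

(* prodA A n m = A (n+m-1) *m ... *m A n  (identity if m = 0) *)
Fixpoint prodA (R : realFieldType) (N : nat) (A : nat -> 'M[R]_N) (n m : nat)
  : 'M[R]_N :=
  match m with
  | 0 => 1%:M
  | m'.+1 => A (n + m') *m prodA A n m'
  end.

Definition Tcount (N : nat) (part : nat -> {set {set 'I_N}}) (n m : nat)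
  (i j : 'I_N) : nat :=
  count (fun r => blk (part r) i == blk (part r) j) (iota n m).

Definition Gmin (N : nat) (part : nat -> {set {set 'I_N}}) (n m : nat) : nat :=
  let s := [seq Tcount part n m i j | i <- enum 'I_N, j <- enum 'I_N] in
  foldr minn (head 0%N s) s.

(* Main.v *)
Require Import Defs.
From HB Require Import structures.
From mathcomp Require Import all_boot all_order all_algebra.
Import Order.TTheory GRing.Theory Num.Theory.
Local Open Scope ring_scope.

Lemma foldr_min_ge (R : realFieldType) (x a : R) (s : seq R) :
  x <= a -> (forall y, y \in s -> x <= y) -> x <= foldr Num.min a s.
Proof.
move=> xa; elim: s => [|y s IH] H //=.
rewrite le_min H ?mem_head //=; apply: IH => z zs; apply: H; by rewrite in_cons zs orbT.
Qed.

Lemma seqminr_ge (R : realFieldType) (x : R) (s : seq R) :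
  s != [::] -> (forall y, y \in s -> x <= y) -> x <= seqminr s.
Proof.
case: s => [//|a s] _ H; apply: foldr_min_ge => //; apply: H; exact: mem_head.
Qed.

Lemma foldr_minn_le (a y : nat) (s : seq nat) :
  y \in s -> (foldr minn a s <= y)%N.
Proof.
elim: s => [//|z s IH] /=; rewrite in_cons => /orP [/eqP ->|ys].
  exact: geq_minl.
exact: leq_trans (geq_minr _ _) (IH ys).
Qed.

Theorem lemma3p4 (R : realFieldType) (N d : nat) (hN : (2 <= N)%N) (hd : (1 <= d)%N)
  (gamma : R) (hg0 : 0 < gamma) (hg1 : gamma < 1)
  (omega : {set 'I_N} -> 'I_N -> ('I_N -> 'rV[R]_d) -> R)
  (homega_ge0 : forall S j X, 0 <= omega S j X)
  (homega_sum : forall S X, S != set0 -> \sum_(j in S) omega S j X = 1)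
  (homega_out : forall S j X, S != set0 -> j \notin S -> omega S j X = 0)
  (part : nat -> {set {set 'I_N}})
  (hpart : forall r, partition (part r) [set: 'I_N])
  (X : nat -> 'I_N -> 'rV[R]_d)
  (n m : nat) (hm : (1 <= m)%N) :
  ergco (prodA (fun r => Amat omega gamma (part r) (X r)) n m)
    >= gamma * (1 - gamma) ^+ m.-1 * (Gmin part n m)%:R.
Proof.
set A := fun r => _.
pose W r := Wmat omega (part r) (X r).
have W0 : forall r i k, 0 <= W r i k by move=> r i k; rewrite mxE.
have Wsum : forall r i, \sum_k W r i k = 1.
  move=> r i; have ne : blk (part r) i != set0.
    apply/set0Pn; exists i; rewrite /blk mem_pblock.
    by case/and3P: (hpart r) => /eqP -> _ _; rewrite inE.
  rewrite -(homega_sum _ (X r) ne) [RHS]big_mkcond /=; apply: eq_bigr => k _.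
  rewrite mxE; case: ifP => // /negbT kn; exact: homega_out.
have g1 : 0 < 1 - gamma by rewrite subr_gt0.
have AB : forall (r : nat) (k : 'I_N) (B : 'M[R]_N) (i : 'I_N),
    (A r *m B) i k = (1 - gamma) * B i k + gamma * \sum_l W r i l * B l k.
  move=> r k B i; rewrite /A /Amat mulmxDl mul_scalar_mx -scalemxAl !mxE.
  by [].
pose B m := prodA A n m.
have inv : forall m, [/\ forall i k, 0 <= B m i k,
                        forall k, (1 - gamma) ^+ m <= B m k k &
                        forall i k, (1 - gamma) ^+ m * gamma *
                           \sum_(r <- iota n m) W r i k <= (1 - gamma) * B m i k].
  elim=> [|m' [IH0 IH1 IH2]].
    split=> [i k|k|i k]; rewrite /B /= ?mxE.
    - by case: (i == k).
    - by rewrite eqxx.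
    - rewrite big_nil mulr0; apply: mulr_ge0; [exact: ltW | by case: (i == k)].
  have BS : forall i k, B m'.+1 i k =
      (1 - gamma) * B m' i k + gamma * \sum_l W (n + m') i l * B m' l k.
    by move=> i k; rewrite /B /= AB.
  have S0 : forall i k, 0 <= \sum_l W (n + m') i l * B m' l k.
    by move=> i k; apply: sumr_ge0 => l _; rewrite mulr_ge0.
  split=> [i k|k|i k]; rewrite BS.
  - apply: addr_ge0; apply: mulr_ge0; [exact: ltW g1|exact: IH0|exact: ltW|exact: S0].
  - rewrite exprS; apply: ler_wpDr; first by apply: mulr_ge0; [exact: ltW|exact: S0].
    by rewrite ler_pM2l.
  - have -> : iota n m'.+1 = iota n m' ++ [:: n + m'] by rewrite -addn1 iotaD.
    rewrite big_cat big_seq1 /= !mulrDr.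
    have key : W (n + m') i k * B m' k k <= \sum_l W (n + m') i l * B m' l k.
      rewrite (bigD1 k) //= lerDl; apply: sumr_ge0 => l _; exact: mulr_ge0.
    apply: lerD.
      rewrite exprS -!mulrA; rewrite ler_pM2l // mulrA; exact: IH2.
    rewrite exprS -!mulrA; rewrite ler_pM2l //.
    rewrite mulrCA; rewrite ler_pM2l //.
    apply: le_trans key; rewrite mulrC; by apply: ler_wpM2l; [exact: W0|exact: IH1].
case: m hm => [//|m'] _.
have [_ _ I2] := inv m'.+1.
set c := gamma * (1 - gamma) ^+ m'.+1.-1.
have c0 : 0 <= c by apply: mulr_ge0; [exact: ltW|apply: exprn_ge0; exact: ltW].
have step1 : forall i k, c * \sum_(r <- iota n m'.+1) W r i k <= B m'.+1 i k.
  move=> i k; rewrite -(ler_pM2l g1); apply: le_trans (I2 i k).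
  by rewrite /c /= exprS (mulrC gamma) -!mulrA.
have filt : forall (P : pred nat) i k,
    \sum_(r <- iota n m'.+1 | P r) W r i k <= \sum_(r <- iota n m'.+1) W r i k.
  move=> P i k; rewrite [X in X <= _]big_mkcond /=; apply: ler_sum => r _.
  by case: (P r).
have i0 : 'I_N := Ordinal (leq_trans (isT : (0 < 2)%N) hN).
rewrite /ergco; apply: seqminr_ge.
  apply/eqP => E.
  have : (\sum_k Num.min (B m'.+1 i0 k) (B m'.+1 i0 k)) \in [::].
    rewrite -E; apply/allpairsP; exists (i0, i0); by rewrite /= !mem_enum.
  by [].
move=> y /allpairsP [[i j] [_ _ ->]] /=.
pose P := fun r => blk (part r) i == blk (part r) j.
have WP : forall k r, P r -> W r i k = W r j k.
  by move=> k r /eqP Pr; rewrite !mxE Pr.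
apply: (@le_trans _ _ (c * (Tcount part n m'.+1 i j)%:R)).
  rewrite ler_wpM2l // ler_nat; apply: foldr_minn_le.
  by apply/allpairsP; exists (i, j); rewrite /= !mem_enum.
have -> : c * (Tcount part n m'.+1 i j)%:R =
    \sum_k c * \sum_(r <- iota n m'.+1 | P r) W r i k.
  rewrite -mulr_sumr exchange_big /=.
  rewrite (eq_bigr (fun _ => 1)); last by move=> r _; exact: Wsum.
  by rewrite /Tcount -sum1_count natr_sum.
apply: ler_sum => k _; rewrite le_min; apply/andP; split.
  apply: le_trans (step1 i k); rewrite ler_wpM2l //.
apply: le_trans (step1 j k); rewrite ler_wpM2l //.
rewrite (eq_bigr (fun r => W r j k)); last by move=> r Pr; exact: WP.
exact: filt.
Qed.
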